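(* Let $f(x)=B_0+B^\top x$ with $B_0\in\mathbb R^m$, $B\in\mathbb R^{n\times m}$, and let $X\sim\mathcal N(\mu,\Sigma)$ with $\Sigma\in\mathbb R^{n\times n}$ symmetric positive definite. For $S\subseteq[n]$ let $A_S=\Sigma_{:,S}\Sigma_{S,S}^{-1}\in\mathbb R^{n\times|S|}$ and let $\widehat A_S\in\mathbb R^{n\times n}$ be obtained by placing the columns of $A_S$ in the positions indexed by $S$ and zeros in the columns outside $S$ (so $\widehat A_\varnothing=0$). For $i\in[n]$ set $$M_i(\Sigma)=\sum_{S\subseteq[n]\setminus\{i\}}\frac{|S|!(n-|S|-1)!}{n!}\big(\widehat A_{S\cup\{i\}}-\widehat A_S\big)\in\mathbb R^{n\times n}.$$ Then for every $x\in\mathbb R^n$ and $i\in[n]$, $\phi_i(f;x)=B^\top M_i(\Sigma)(x-\mu)\in\mathbb R^m$.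
   Context: For $S\subseteq[n]=\{1,\dots,n\}$, $X_S,x_S,\mu_S$ denote subvectors indexed by $S$; $\Sigma_{S,S}$ is the principal submatrix of $\Sigma$ indexed by $S$ and $\Sigma_{:,S}$ the $n\times|S|$ submatrix of columns indexed by $S$. Define $v_f(S)=\mathbb E[f(X)\mid X_S=x_S]-\mathbb E[f(X)]\in\mathbb R^m$ (with $\mathbb E[f(X)\mid X_\varnothing]=\mathbb E[f(X)]$), and the SHAP value $\phi_i(f;x)=\sum_{S\subseteq[n]\setminus\{i\}}\frac{|S|!(n-|S|-1)!}{n!}(v_f(S\cup\{i\})-v_f(S))$. *)

(* Defs.v *)
From HB Require Import structures.
From mathcomp Require Import all_boot all_order all_algebra.
From mathcomp Require Import all_classical all_reals all_analysis.
Set Implicit Arguments. Unset Strict Implicit. Unset Printing Implicit Defensive.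
Import Order.TTheory GRing.Theory Num.Theory.
Local Open Scope ring_scope.

Section Defs.
Variables (R : realType) (n : nat).

Definition spd (Sigma : 'M[R]_n) : Prop :=
  Sigma^T = Sigma /\ forall v : 'cV[R]_n, v != 0 -> 0 < (v^T *m Sigma *m v) 0 0.

Definition gauss_pdf (mu : 'cV[R]_n) (Sigma : 'M[R]_n) (x : 'cV[R]_n) : R :=
  expR (- (((x - mu)^T *m invmx Sigma *m (x - mu)) 0 0) / 2)
  / Num.sqrt ((2 * pi) ^+ n * \det Sigma).

Definition setcoord (x : 'cV[R]_n) (j : 'I_n) (t : R) : 'cV[R]_n :=
  \col_k (if k == j then t else x k 0).

Fixpoint iterint (l : seq 'I_n) (g : 'cV[R]_n -> R) (x : 'cV[R]_n) : R :=
  match l with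
  | [::] => g x
  | j :: l' => Rintegral lebesgue_measure setT (fun t => iterint l' g (setcoord x j t))
  end.

(* E[g(X) | X_S = x_S] for X ~ N(mu, Sigma), via the conditional density
   p(x_S, y) / int p(x_S, y) dy  (y ranging over the coordinates outside S).
   For S = set0 this is E[g(X)] (the denominator is the total mass 1). *)
Definition gauss_condexp (mu : 'cV[R]_n) (Sigma : 'M[R]_n) (S : {set 'I_n})
    (g : 'cV[R]_n -> R) (x : 'cV[R]_n) : R :=
  iterint (enum (~: S)) (fun y => g y * gauss_pdf mu Sigma y) x
  / iterint (enum (~: S)) (gauss_pdf mu Sigma) x.

Definition vf (m : nat) (mu : 'cV[R]_n) (Sigma : 'M[R]_n)
    (f : 'cV[R]_n -> 'cV[R]_m) (x : 'cV[R]_n) (S : {set 'I_n}) : 'cV[R]_m :=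
  \col_k (gauss_condexp mu Sigma S (fun y => f y k 0) x
          - gauss_condexp mu Sigma finset.set0 (fun y => f y k 0) x).

Definition shap_weight (s : nat) : R := ((s`! * (n - s - 1)`!)%:R / (n`!)%:R).

Definition shap (m : nat) (mu : 'cV[R]_n) (Sigma : 'M[R]_n)
    (f : 'cV[R]_n -> 'cV[R]_m) (x : 'cV[R]_n) (i : 'I_n) : 'cV[R]_m :=
  \sum_(S : {set 'I_n} | i \notin S)
     shap_weight #|S| *: (vf mu Sigma f x (i |: S) - vf mu Sigma f x S).

Definition selmx (S : {set 'I_n}) : 'M[R]_(n, #|S|) :=
  \matrix_(i, k) (i == enum_val k)%:R.

(* hat A_S = Sigma_{:,S} Sigma_{S,S}^{-1}, columns placed at positions S *)
Definition Ahat (Sigma : 'M[R]_n) (S : {set 'I_n}) : 'M[R]_n :=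
  (Sigma *m selmx S) *m invmx ((selmx S)^T *m Sigma *m selmx S) *m (selmx S)^T.

Definition Mi (Sigma : 'M[R]_n) (i : 'I_n) : 'M[R]_n :=
  \sum_(S : {set 'I_n} | i \notin S)
     shap_weight #|S| *: (Ahat Sigma (i |: S) - Ahat Sigma S).

End Defs.

(* Main.v *)
Require Import Defs.
From HB Require Import structures.
From mathcomp Require Import all_boot all_order all_algebra.
From mathcomp Require Import all_classical all_reals all_analysis.
From mathcomp Require Import measurable_realfun.
From mathcomp Require Import ring lra.
Set Implicit Arguments. Unset Strict Implicit. Unset Printing Implicit Defensive.
Import Order.TTheory GRing.Theory Num.Theory.
Import numFieldNormedType.Exports.
Local Open Scope classical_set_scope.
Local Open Scope ring_scope.

Section A.
Context {R : realType}.
Local Notation mu := (@lebesgue_measure R).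
Lemma ge0_integral_shift (G : R -> R) (e : R) : continuous G ->
  (forall x, 0 <= G x) ->
  (\int[mu]_x (G x)%:E = \int[mu]_x (G (x + e))%:E)%E.
Proof.
move=> cG G0.
have F'E : (fun x : R => x + e)^`()%classic = cst 1.
  by apply/funext => x; rewrite derive1E deriveD// derive_id derive_cst addr0.
rewrite (@increasing_ge0_integration_by_substitutionT _ (fun x => x + e) G); last 9 first.
- by move=> x y xy; rewrite ltrD2r.
- by rewrite F'E; exact: cst_continuous.
- by rewrite F'E; exact: is_cvg_cst.
- by rewrite F'E; exact: is_cvg_cst.
- by move=> x; exact: derivableD.
- exact: cvg_addrr_Ny.
- exact: cvg_addrr.
- exact: cG.
- exact: G0.
by apply: eq_integral => x _; rewrite F'E /= mulr1.
Qed.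
Local Open Scope ereal_scope.
Lemma ge0_integral_split (f : R -> R) : (forall x, 0 <= f x)%R ->
  continuous f ->
  \int[mu]_x (f x)%:E = \int[mu]_(x in [set x | (0 <= x)%R]) (f x)%:E
     + \int[mu]_(x in [set x | (0 <= x)%R]) (f (- x))%:E.
Proof.
move=> f0 cf.
have mf : measurable_fun [set: R] f by exact: continuous_measurable_fun.
have mposnums : measurable [set x : R | 0 <= x]%R by rewrite -set_itvcy.
rewrite -(setUv [set x : R | 0 <= x]%R) ge0_integral_setU//= ; last 4 first.
  exact: measurableC.
  by apply/measurable_EFinP; rewrite setUv.
  by move=> x _; rewrite lee_fin.
  exact/disj_setPCl.
congr +%E.
rewrite -set_itvcy// setCitvr.
rewrite integral_itv_bndo_bndc; last exact/measurable_EFinP/measurable_funTS.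
rewrite -{1}oppr0 ge0_integration_by_substitutionNy//.
- exact: continuous_subspaceT.
Qed.
Lemma ge0_integral_opp (f : R -> R) : (forall x, 0 <= f x)%R ->
  continuous f ->
  \int[mu]_x (f x)%:E = \int[mu]_x (f (- x))%:E.
Proof.
move=> f0 cf.
have cf' : continuous (fun x : R => f (- x)%R).
  move=> x; apply: continuous_comp; last exact: cf.
  exact: continuousN.
rewrite ge0_integral_split// (ge0_integral_split (f := fun x : R => f (- x)%R))//.
rewrite addeC; congr (_ + _); apply: eq_integral => x _; by rewrite opprK.
Qed.
Local Close Scope ereal_scope.
Definition gpsi (c d t : R) := expR (- (c * (t - d) ^+ 2) / 2).

Lemma continuous_gpsi c d : continuous (gpsi c d).
Proof.
move=> x; apply: (cvg_comp _ expR); last exact: continuous_expR.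
apply: cvgM; last exact: cvg_cst.
apply: (@cvgN _ R^o).
apply: cvgM; first exact: cvg_cst.
apply: (cvg_comp (fun x => x - d) (fun x => x ^+ 2)).
  by apply: (@cvgB _ R^o) => //; [exact: cvg_id|exact: cvg_cst].
exact: sqr_continuous.
Qed.

Lemma gpsi_ge0 c d t : 0 <= gpsi c d t.
Proof. exact: expR_ge0. Qed.

Lemma gpsi_normal c d : 0 < c ->
  gpsi c d = fun t => (normal_peak (Num.sqrt c^-1))^-1 * normal_pdf d (Num.sqrt c^-1) t.
Proof.
move=> c0; have s0 : Num.sqrt c^-1 != 0 by rewrite gt_eqF // sqrtr_gt0 invr_gt0.
apply/funext => t; rewrite normal_pdfE //.
have pk : normal_peak (Num.sqrt c^-1) != 0 by rewrite gt_eqF // normal_peak_gt0.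
rewrite mulKf //; rewrite /gpsi /normal_fun; congr expR.
rewrite sqr_sqrtr ?invr_ge0 ?ltW //.
rewrite -mulr_natr; field; by rewrite gt_eqF.
Qed.

Lemma integrable_gpsi c d : 0 < c -> mu.-integrable setT (EFin \o gpsi c d).
Proof.
move=> c0; rewrite gpsi_normal //.
have := integrableZl measurableT (normal_peak (Num.sqrt c^-1))^-1 (integrable_normal_pdf d (Num.sqrt c^-1)).
by apply: eq_integrable => // x _ /=; rewrite EFinM.
Qed.

Definition gK (c : R) := (normal_peak (Num.sqrt c^-1))^-1.

Lemma gK_gt0 c : 0 < c -> 0 < gK c.
Proof.
move=> c0; rewrite /gK invr_gt0 normal_peak_gt0 // gt_eqF // sqrtr_gt0 invr_gt0 //.
Qed.

Lemma Rintegral_gpsi c d : 0 < c -> \int[mu]_(t in setT) gpsi c d t = gK c.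
Proof.
move=> c0; rewrite gpsi_normal // RintegralZl //; last first.
  exact: integrable_normal_pdf.
by rewrite /Rintegral integral_normal_pdf /= mulr1.
Qed.
End A.


Section A.
Context {R : realType}.
Local Notation mu := (@lebesgue_measure R).

Definition g1 (c d t : R) := Num.max (t - d) 0 * gpsi c d t.
Definition g2 (c d t : R) := Num.max (d - t) 0 * gpsi c d t.

Lemma continuous_g1 c d : continuous (g1 c d).
Proof.
have hm : continuous ((fun t : R => t - d) \max (cst (0:R))).
  apply: max_fun_continuous; last exact: cst_continuous.
  by move=> y; apply: (@cvgB _ R^o); [exact: cvg_id|exact: cvg_cst].
move=> x; apply: cvgM; last exact: continuous_gpsi.
exact: hm.
Qed.

Lemma continuous_g2 c d : continuous (g2 c d).
Proof.
have hm : continuous ((fun t : R => d - t) \max (cst (0:R))).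
  apply: max_fun_continuous; last exact: cst_continuous.
  by move=> y; apply: (@cvgB _ R^o); [exact: cvg_cst|exact: cvg_id].
move=> x; apply: cvgM; last exact: continuous_gpsi.
exact: hm.
Qed.

Lemma g1_ge0 c d t : 0 <= g1 c d t.
Proof. by rewrite mulr_ge0 ?gpsi_ge0 // le_max lexx orbT. Qed.

Lemma g2_ge0 c d t : 0 <= g2 c d t.
Proof. by rewrite mulr_ge0 ?gpsi_ge0 // le_max lexx orbT. Qed.

Lemma g1_bound c d t : 0 < c -> g1 c d t <= (1 + c^-1) * gpsi (c / 2) d t.
Proof.
move=> c0; rewrite /g1 /gpsi.
set s := t - d.
have -> : expR (- (c / 2 * s ^+ 2) / 2) = expR (- (c * s ^+ 2) / 2) * expR (c * s ^+ 2 / 4).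
  by rewrite -expRD; congr expR; field.
set E := expR (- (c * s ^+ 2) / 2).
set F := c * s ^+ 2 / 4.
have -> : (1 + c^-1) * (E * expR F) = E * ((1 + c^-1) * expR F) by ring.
rewrite [X in X <= _]mulrC ler_pM2l; last exact: expR_gt0.
have k0 : 0 < c^-1 by rewrite invr_gt0.
have F0 : 0 <= F by rewrite /F; apply: divr_ge0 => //; apply: mulr_ge0; [exact: ltW | exact: sqr_ge0].
apply: (@le_trans _ _ ((1 + c^-1) * (1 + F))); last first.
  by rewrite ler_pM2l ?expR_ge1Dx // ltr_wpDr // ltW.
have ki : c^-1 * c = 1 by rewrite mulVf // gt_eqF.
rewrite ge_max; apply/andP; split; last first.
  by apply: mulr_ge0; lra.
have : s <= c^-1 + F.
  have e : c^-1 + F - s = c^-1 * (2 - c * s) ^+ 2 / 4.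
    rewrite /F; field; by rewrite gt_eqF.
  rewrite -subr_ge0 e; apply: divr_ge0 => //; apply: mulr_ge0; [exact: ltW | exact: sqr_ge0].
have : 0 <= c^-1 * F by apply: mulr_ge0 => //; exact: ltW.
move: k0 F0; set k := c^-1; nra.
Qed.

Lemma gpsi_sym (c d t : R) : gpsi c d (d * 2 - t) = gpsi c d t.
Proof. by rewrite /gpsi; congr expR; congr (- (c * _) / 2); ring. Qed.

Lemma g2_sym (c d t : R) : g2 c d t = g1 c d (d * 2 - t).
Proof.
rewrite /g1 /g2 gpsi_sym; congr (Num.max _ _ * _); ring.
Qed.

Lemma g2_bound (c d t : R) : 0 < c -> g2 c d t <= (1 + c^-1) * gpsi (c / 2) d t.
Proof. by move=> c0; rewrite g2_sym -[in leRHS](gpsi_sym (c / 2) d t) g1_bound. Qed.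

Lemma integrable_g_aux (f : R -> R) (c d : R) : 0 < c -> continuous f ->
  (forall t, 0 <= f t <= (1 + c^-1) * gpsi (c / 2) d t) ->
  mu.-integrable setT (EFin \o f).
Proof.
move=> c0 cf fb.
have c20 : 0 < c / 2 by rewrite divr_gt0.
apply: (le_integrable measurableT _ _ (integrableZl measurableT (1 + c^-1) (integrable_gpsi d c20))).
  by apply/measurable_EFinP; exact: continuous_measurable_fun.
move=> x _ /=; have /andP[h1 h2] := fb x.
rewrite lee_fin !ger0_norm //.
apply: mulr_ge0; last exact: gpsi_ge0.
by apply: addr_ge0 => //; rewrite invr_ge0 ltW.
Qed.

Lemma integrable_g1 (c d : R) : 0 < c -> mu.-integrable setT (EFin \o g1 c d).
Proof.
move=> c0; apply: (@integrable_g_aux (g1 c d) c d c0 (@continuous_g1 c d)) => t.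
by rewrite g1_ge0 g1_bound.
Qed.

Lemma integrable_g2 (c d : R) : 0 < c -> mu.-integrable setT (EFin \o g2 c d).
Proof.
move=> c0; apply: (@integrable_g_aux (g2 c d) c d c0 (@continuous_g2 c d)) => t.
by rewrite g2_ge0 g2_bound.
Qed.

Lemma integral_g1_g2 (c d : R) : (\int[mu]_x (g1 c d x)%:E = \int[mu]_x (g2 c d x)%:E)%E.
Proof.
rewrite (ge0_integral_shift d (@continuous_g1 c d) (@g1_ge0 c d)).
rewrite (ge0_integral_shift d (@continuous_g2 c d) (@g2_ge0 c d)).
have e1 x : g1 c d (x + d) = g1 c 0 x.
  by rewrite /g1 /gpsi !subr0 addrK.
have e2 x : g2 c d (x + d) = g2 c 0 x.
  by rewrite /g2 /gpsi !subr0 addrK; congr (Num.max _ _ * _); ring.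
under eq_integral do rewrite e1.
under [in RHS]eq_integral do rewrite e2.
rewrite [in RHS](ge0_integral_opp (@g2_ge0 c 0) (@continuous_g2 c 0)).
apply: eq_integral => x _; congr EFin.
rewrite g2_sym; congr g1; ring.
Qed.

Lemma Rintegral_odd (c d : R) : 0 < c ->
  mu.-integrable setT (EFin \o (fun t => (t - d) * gpsi c d t)) /\
  \int[mu]_(t in setT) ((t - d) * gpsi c d t) = 0.
Proof.
move=> c0.
have e : (fun t => (t - d) * gpsi c d t) = (fun t => g1 c d t - g2 c d t).
  apply/funext => t; rewrite /g1 /g2 -mulrBl; congr (_ * _).
  case: (leP 0 (t - d)) => h.
    rewrite max_r ?subr0 //; lra.
  rewrite max_l ?sub0r ?opprB //; lra.
rewrite e; split.
  exact: (integrableB measurableT (integrable_g1 d c0) (integrable_g2 d c0)).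
rewrite RintegralB //; [|exact: integrable_g1|exact: integrable_g2].
by rewrite /Rintegral integral_g1_g2 subrr.
Qed.



Lemma gauss1d (c h p r al be : R) : 0 < c ->
 \int[mu]_(t in setT) ((al + be * (t - h)) * expR (- (c * (t - h) ^+ 2 + 2 * p * (t - h) + r) / 2))
 = (al - be * p / c) * gK c * expR (- (r - p ^+ 2 / c) / 2).
Proof.
move=> c0.
set d := h - p / c; set E := expR (- (r - p ^+ 2 / c) / 2).
have e : (fun t => (al + be * (t - h)) * expR (- (c * (t - h) ^+ 2 + 2 * p * (t - h) + r) / 2))
  = (fun t => ((al - be * p / c) * E) * gpsi c d t + (be * E) * ((t - d) * gpsi c d t)).
  apply/funext => t.
  have -> : expR (- (c * (t - h) ^+ 2 + 2 * p * (t - h) + r) / 2) = E * gpsi c d t.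
    rewrite /E /gpsi -expRD; congr expR; rewrite /d; field; by rewrite gt_eqF.
  rewrite /d; field; by rewrite gt_eqF.
have [io ro] := Rintegral_odd d c0.
rewrite e RintegralD //; last 2 first.
- exact: (integrableZl measurableT _ (integrable_gpsi d c0)).
- exact: (integrableZl measurableT _ io).
rewrite RintegralZl //; last exact: integrable_gpsi.
rewrite RintegralZl // ro mulr0 addr0 Rintegral_gpsi //.
by rewrite -mulrA [E * _]mulrC mulrA.
Qed.
End A.


Section B.
Context {R : realType} {n : nat}.
Implicit Types (u v w b : 'cV[R]_n) (A Q : 'M[R]_n) (j k : 'I_n).

Definition dotv b u : R := \sum_k b k 0 * u k 0.
Definition qf Q u : R := (u^T *m Q *m u) 0 0.

Lemma mvE A u i : (A *m u) i 0 = \sum_k A i k * u k 0.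
Proof. by rewrite mxE. Qed.

Lemma qf_dot Q u : qf Q u = \sum_k u k 0 * (Q *m u) k 0.
Proof.
rewrite /qf -mulmxA mxE; apply: eq_bigr => k _; by rewrite mxE.
Qed.

Lemma setcoordE u j a k : setcoord u j a k 0 = if k == j then a else u k 0.
Proof. by rewrite mxE. Qed.

Lemma sum_setcoord (f : 'I_n -> R) u j a :
  \sum_k f k * setcoord u j a k 0 = \sum_k f k * u k 0 + f j * (a - u j 0).
Proof.
rewrite (bigD1 j) //= [X in _ = X + _](bigD1 j) //= setcoordE eqxx.
have -> : \sum_(i | i != j) f i * setcoord u j a i 0 = \sum_(i | i != j) f i * u i 0.
  by apply: eq_bigr => i /negbTE ij; rewrite setcoordE ij.
ring.
Qed.

Lemma sum_setcoordl (f : 'I_n -> R) u j a :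
  \sum_k setcoord u j a k 0 * f k = \sum_k u k 0 * f k + (a - u j 0) * f j.
Proof.
under eq_bigr do rewrite mulrC.
rewrite sum_setcoord mulrC; congr (_ + _); apply: eq_bigr => k _; by rewrite mulrC.
Qed.

Lemma mv_setcoord A u j a i :
  (A *m setcoord u j a) i 0 = (A *m u) i 0 + A i j * (a - u j 0).
Proof. by rewrite !mvE sum_setcoord. Qed.

Lemma dot_setcoord b u j a : dotv b (setcoord u j a) = dotv b u + b j 0 * (a - u j 0).
Proof. by rewrite /dotv sum_setcoord. Qed.

Lemma sym_mv Q u j : Q^T = Q -> \sum_k u k 0 * Q k j = (Q *m u) j 0.
Proof.
move=> sQ; rewrite mvE; apply: eq_bigr => k _.
by rewrite -[in RHS]sQ mxE mulrC.
Qed.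

Lemma qf_setcoord Q u j a : Q^T = Q ->
  qf Q (setcoord u j a) = qf Q u + 2 * (a - u j 0) * (Q *m u) j 0 + (a - u j 0) ^+ 2 * Q j j.
Proof.
move=> sQ; rewrite !qf_dot.
under eq_bigr do rewrite mv_setcoord mulrDr.
rewrite big_split /= sum_setcoordl.
have -> : \sum_k setcoord u j a k 0 * (Q k j * (a - u j 0))
   = (\sum_k (Q k j * (a - u j 0)) * setcoord u j a k 0).
  by apply: eq_bigr => k _; rewrite mulrC.
rewrite sum_setcoord.
have -> : \sum_k Q k j * (a - u j 0) * u k 0 = (a - u j 0) * (Q *m u) j 0.
  rewrite -(sym_mv u j sQ) big_distrr /=; apply: eq_bigr => k _; ring.
ring.
Qed.

Lemma setcoord_sub (x nu : 'cV[R]_n) j (t : R) : setcoord x j t - nu = setcoord (x - nu) j (t - nu j 0).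
Proof.
apply/matrixP => k l; rewrite (ord1 l) !(setcoordE, mxE); by case: eqP => [->|].
Qed.

Lemma setcoord_id u j : setcoord u j (u j 0) = u.
Proof. apply/matrixP => k l; rewrite (ord1 l) !setcoordE; by case: eqP => // ->. Qed.

Lemma setcoord_setcoord u j (a c : R) : setcoord (setcoord u j a) j c = setcoord u j c.
Proof. apply/matrixP => k l; rewrite (ord1 l) !setcoordE; by case: eqP. Qed.

Definition schur Q j : 'M[R]_n := \matrix_(i, k) (Q i k - Q i j * Q j k / Q j j).

Lemma schur_sym Q j : Q^T = Q -> (schur Q j)^T = schur Q j.
Proof.
move=> sQ; apply/matrixP => i k; rewrite !mxE.
have e : forall (a1 a2 : 'I_n), Q a1 a2 = Q a2 a1 by move=> a1 a2; rewrite -[in LHS]sQ mxE.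
rewrite (e k i) (e k j) (e j i); ring.
Qed.

Lemma schur_mv Q j u i : (schur Q j *m u) i 0 = (Q *m u) i 0 - Q i j * (Q *m u) j 0 / Q j j.
Proof.
rewrite !mvE; under eq_bigr do rewrite mxE mulrBl.
rewrite sumrB; congr (_ - _).
rewrite mulrAC -mulrA big_distrr /=; rewrite mulr_sumr.
by apply: eq_bigr => k _; ring.
Qed.

Lemma qf_schur Q j u : Q^T = Q ->
  qf (schur Q j) u = qf Q u - ((Q *m u) j 0) ^+ 2 / Q j j.
Proof.
move=> sQ; rewrite !qf_dot.
under eq_bigr do rewrite schur_mv mulrBr.
rewrite sumrB; congr (_ - _).
have -> : \sum_k u k 0 * (Q k j * (Q *m u) j 0 / Q j j)
   = (\sum_k u k 0 * Q k j) * ((Q *m u) j 0 / Q j j).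
  by rewrite mulr_suml; apply: eq_bigr => k _; rewrite -!mulrA.
by rewrite sym_mv // mulrA expr2.
Qed.

End B.


Section K.
Context {R : realType} {n : nat}.
Implicit Types (u v w b x nu : 'cV[R]_n) (A Q : 'M[R]_n) (j k : 'I_n) (l : seq 'I_n).

Definition Gf Q nu (y : 'cV[R]_n) : R := expR (- qf Q (y - nu) / 2).

Definition agree l u v := forall k, k \notin l -> v k 0 = u k 0.
Definition zeroon l Q v := forall k, k \in l -> (Q *m v) k 0 = 0.
Definition pdon l Q := forall v, v != 0 -> (forall k, k \notin l -> v k 0 = 0) -> 0 < qf Q v.

Definition keyP nu l Q (K : R) (Q' : 'M[R]_n) :=
  [/\ 0 < K, Q'^T = Q',
   (forall u v, agree l u v -> zeroon l Q v -> Q' *m u = Q *m v),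
   (forall u, exists v, agree l u v /\ zeroon l Q v) &
   forall (a : R) b, exists b',
     (forall u v, agree l u v -> zeroon l Q v -> dotv b' u = dotv b v) /\
     forall x, iterint l (fun y => (a + dotv b (y - nu)) * Gf Q nu y) x
             = (a + dotv b' (x - nu)) * K * Gf Q' nu x].

Lemma e_jE j k : (setcoord 0 j 1 : 'cV[R]_n) k 0 = (k == j)%:R.
Proof. by rewrite setcoordE mxE; case: (k == j). Qed.

Definition bnew (b : 'cV[R]_n) Q j : 'cV[R]_n := \col_k (b k 0 - b j 0 * Q j k / Q j j).

Lemma dot_bnew b Q j u : dotv (bnew b Q j) u = dotv b u - b j 0 * (Q *m u) j 0 / Q j j.
Proof.
rewrite /dotv mvE; under eq_bigr do rewrite mxE mulrBl.
rewrite sumrB; congr (_ - _).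
rewrite mulrAC -mulrA big_distrr /= mulr_sumr.
by apply: eq_bigr => k _; ring.
Qed.

Lemma key nu l Q : uniq l -> Q^T = Q -> pdon l Q -> exists K Q', keyP nu l Q K Q'.
Proof.
move=> + sQ; elim: l => [_ _|j l IH /= /andP [jl ul] pd].
  exists 1, Q; split => //.
  - move=> u v ag _; have -> // : v = u by apply/matrixP => k i; rewrite (ord1 i); exact: ag.
  - by move=> u; exists u; split.
  move=> a b; exists b; split.
    move=> u v ag _; have -> // : v = u by apply/matrixP => k i; rewrite (ord1 i); exact: ag.
  by move=> x /=; rewrite mulr1.
have pd' : pdon l Q.
  move=> v v0 sv; apply: pd => // k; rewrite in_cons negb_or => /andP[_]; exact: sv.
have [K' [Q'' [K0 sQ'' ch ex lin]]] := IH ul pd'.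
set c := Q'' j j.
have c0 : 0 < c.
  have [v [ag zr]] := ex (setcoord 0 j 1).
  have e1 := ch _ _ ag zr.
  have cE : c = (Q *m v) j 0.
    by rewrite -e1 mv_setcoord mulmx0 mxE subr0 mulr1 add0r.
  have vj : v j 0 = 1 by rewrite ag // e_jE eqxx.
  have qv : qf Q v = (Q *m v) j 0.
    rewrite qf_dot (bigD1 j) //= big1 ?addr0 ?vj ?mul1r //.
    move=> k kj; case: (boolP (k \in l)) => kl; first by rewrite zr // mulr0.
    by rewrite ag // e_jE (negbTE kj) mul0r.
  rewrite cE -qv; apply: pd.
    by apply/negP => /eqP v0; move: vj; rewrite v0 mxE => /eqP; rewrite eq_sym oner_eq0.
  move=> k; rewrite in_cons negb_or => /andP[kj kl].
  by rewrite ag // e_jE (negbTE kj).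
have cn0 : c != 0 by rewrite gt_eqF.
have chj : forall u v, agree (j :: l) u v -> zeroon (j :: l) Q v ->
   Q'' *m setcoord u j (v j 0) = Q *m v /\ (Q'' *m u) j 0 = - c * (v j 0 - u j 0).
  move=> u v ag zr.
  have ag' : agree l (setcoord u j (v j 0)) v.
    move=> k kl; rewrite setcoordE; case: eqP => [->//|/eqP kj].
    by apply: ag; rewrite in_cons negb_or kj.
  have zr' : zeroon l Q v by move=> k kl; apply: zr; rewrite in_cons kl orbT.
  have h := ch _ _ ag' zr'.
  split => //.
  have : (Q'' *m setcoord u j (v j 0)) j 0 = 0 by rewrite h; apply: zr; exact: mem_head.
  rewrite mv_setcoord -/c => hj.
  by apply/eqP; rewrite -subr_eq0; rewrite -hj; apply/eqP; ring.
exists (K' * gK c), (schur Q'' j); split.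
- by rewrite mulr_gt0 // gK_gt0.
- exact: schur_sym.
- move=> u v ag zr; have [h hj] := chj u v ag zr.
  apply/matrixP => i o; rewrite (ord1 o) schur_mv -h mv_setcoord -/c hj.
  by field.
- move=> u; set s := u j 0 - (Q'' *m u) j 0 / c.
  have [v [ag zr]] := ex (setcoord u j s).
  exists v; split.
    move=> k; rewrite in_cons negb_or => /andP[kj kl].
    by rewrite ag // setcoordE (negbTE kj).
  move=> k; rewrite in_cons => /orP[/eqP ->|kl]; last exact: zr.
  rewrite -(ch _ _ ag zr) mv_setcoord -/c /s; field.
  by [].
move=> a b; have [b'' [chb fb]] := lin a b.
exists (bnew b'' Q'' j); split.
  move=> u v ag zr; have [h hj] := chj u v ag zr.
  have ag' : agree l (setcoord u j (v j 0)) v.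
    move=> k kl; rewrite setcoordE; case: eqP => [->//|/eqP kj].
    by apply: ag; rewrite in_cons negb_or kj.
  have zr' : zeroon l Q v by move=> k kl; apply: zr; rewrite in_cons kl orbT.
  rewrite -(chb _ _ ag' zr') dot_bnew dot_setcoord -/c hj; by field.
move=> x /=.
set u := x - nu.
set h' := nu j 0 + u j 0.
set p := (Q'' *m u) j 0.
set r := qf Q'' u.
have -> : (fun t => iterint l (fun y => (a + dotv b (y - nu)) * Gf Q nu y) (setcoord x j t))
   = (fun t => ((a + dotv b'' u) * K' + b'' j 0 * K' * (t - h'))
        * expR (- (c * (t - h') ^+ 2 + 2 * p * (t - h') + r) / 2)).
  apply/funext => t; rewrite fb /Gf setcoord_sub qf_setcoord // dot_setcoord -/u -/c -/p -/r.
  have -> : t - nu j 0 - u j 0 = t - h' by rewrite /h'; ring.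
  have -> : r + 2 * (t - h') * p + (t - h') ^+ 2 * c = c * (t - h') ^+ 2 + 2 * p * (t - h') + r by ring.
  ring.
rewrite gauss1d // /Gf -/u qf_schur // -/c -/p -/r dot_bnew -/c -/p.
by field.
Qed.

End K.


Section D.
Context {R : realType}.

Lemma sumsq_gt0 m (v : 'cV[R]_m) : v != 0 -> 0 < (v^T *m v) 0 0.
Proof.
move=> v0; rewrite mxE lt_def; apply/andP; split; last first.
  by apply: sumr_ge0 => k _; rewrite mxE -expr2 sqr_ge0.
apply/negP => /eqP /psumr_eq0P h.
have {}h : forall k, v^T 0 k * v k 0 = 0.
  by move=> k; apply: h => // i _; rewrite mxE -expr2 sqr_ge0.
move/negP: v0; apply; apply/eqP/matrixP => k o; rewrite (ord1 o) mxE.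
by have := h k; rewrite mxE -expr2 => /eqP; rewrite sqrf_eq0 => /eqP.
Qed.

Lemma pd_path m (A : 'M[R]_m) (t : R) :
  (forall v : 'cV_m, v != 0 -> 0 < (v^T *m A *m v) 0 0) -> 0 <= t <= 1 ->
  forall v : 'cV_m, v != 0 -> 0 < (v^T *m ((1 - t)%:M + t *: A) *m v) 0 0.
Proof.
move=> pd /andP[t0 t1] v v0.
have -> : (v^T *m ((1 - t)%:M + t *: A) *m v) 0 0
    = (1 - t) * (v^T *m v) 0 0 + t * (v^T *m A *m v) 0 0.
  by rewrite mulmxDr mulmxDl mul_mx_scalar -scalemxAl -!scalemxAr -scalemxAl !mxE.
have h1 := sumsq_gt0 v0; have h2 := pd v v0.
case: (eqVneq t 0) => [->|tn0]; first by rewrite subr0 mul1r mul0r addr0.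
have tp : 0 < t by rewrite lt_def tn0.
have : 0 <= 1 - t by lra. nra.
Qed.

Lemma pd_det_neq0 m (A : 'M[R]_m) : A^T = A ->
  (forall v : 'cV_m, v != 0 -> 0 < (v^T *m A *m v) 0 0) -> \det A != 0.
Proof.
move=> sA pd; apply/negP => /det0P [w w0 wA].
have : 0 < ((w^T)^T *m A *m w^T) 0 0 by apply: pd; rewrite trmx_eq0.
by rewrite trmxK wA mul0mx mxE ltxx.
Qed.


Lemma sym_path m (A : 'M[R]_m) (t : R) : A^T = A -> ((1 - t)%:M + t *: A)^T = (1 - t)%:M + t *: A.
Proof. by move=> sA; rewrite linearD /= tr_scalar_mx linearZ /= sA. Qed.

Lemma detpos m (A : 'M[R]_m) : A^T = A ->
  (forall v : 'cV_m, v != 0 -> 0 < (v^T *m A *m v) 0 0) -> 0 < \det A.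
Proof.
move=> sA pd.
pose Mp : 'M[{poly R}]_m := \matrix_(i, k) ((1 - 'X) * (i == k)%:R + 'X * (A i k)%:P).
pose P := \det Mp.
have PE t : P.[t] = \det ((1 - t)%:M + t *: A).
  rewrite /P -horner_evalE -det_map_mx; congr (\det _); apply/matrixP => i k.
  rewrite !mxE /= horner_evalE; case: (i == k); rewrite !hornerE /=; ring.
rewrite lt_def; apply/andP; split; first exact: pd_det_neq0.
rewrite leNgt; apply/negP => dlt.
have h0 : (- P).[0] <= 0 <= (- P).[1].
  rewrite !hornerN !PE subr0 scale0r addr0 det1 subrr scale1r.
  apply/andP; split; first by rewrite lerN10.
  rewrite oppr_ge0 (_ : (0:R)%:M = 0) ?add0r; first exact: ltW.
  by apply/matrixP => i k; rewrite !mxE mul0rn.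
have [x /andP[x0 x1] rt] := poly_ivt ler01 h0.
move: rt; rewrite /root hornerN oppr_eq0 PE => /eqP hd.
have : \det ((1 - x)%:M + x *: A) != 0.
  apply: pd_det_neq0; first exact: sym_path.
  apply: pd_path => //; exact/andP.
by rewrite hd eqxx.
Qed.
End D.


Section F.
Context {R : realType} {n : nat}.

Definition PDm m (A : 'M[R]_m) := forall v : 'cV_m, v != 0 -> 0 < (v^T *m A *m v) 0 0.

Lemma unit_pd m (A : 'M[R]_m) : A^T = A -> PDm A -> A \in unitmx.
Proof. by move=> sA pd; rewrite unitmxE unitfE gt_eqF // detpos. Qed.

Lemma selmxE (S : {set 'I_n}) i k : selmx R S i k = (i == enum_val k)%:R.
Proof. by rewrite mxE. Qed.

Lemma selmx_mv (S : {set 'I_n}) (v : 'cV[R]_#|S|) r : (selmx R S *m v) (enum_val r) 0 = v r 0.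
Proof.
rewrite mxE (bigD1 r) //= selmxE eqxx mul1r big1 ?addr0 // => k kr.
by rewrite selmxE (inj_eq enum_val_inj) eq_sym (negbTE kr) mul0r.
Qed.

Lemma selmxT_mv (S : {set 'I_n}) (v : 'cV[R]_n) r : ((selmx R S)^T *m v) r 0 = v (enum_val r) 0.
Proof.
rewrite mxE (bigD1 (enum_val r)) //= mxE selmxE eqxx mul1r big1 ?addr0 // => k kr.
by rewrite mxE selmxE (negbTE kr) mul0r.
Qed.

Lemma selmx_out (S : {set 'I_n}) m (M : 'M[R]_(#|S|, m)) k c : k \notin S -> (selmx R S *m M) k c = 0.
Proof.
move=> kS; rewrite mxE big1 // => r _; rewrite selmxE.
case: eqP => [e|]; last by rewrite mul0r.
by move: kS; rewrite e enum_valP.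
Qed.

Lemma pd_sub (Sigma : 'M[R]_n) (S : {set 'I_n}) : PDm Sigma ->
  PDm ((selmx R S)^T *m Sigma *m selmx R S).
Proof.
move=> pd v v0.
have -> : v^T *m ((selmx R S)^T *m Sigma *m selmx R S) *m v
   = (selmx R S *m v)^T *m Sigma *m (selmx R S *m v) by rewrite trmx_mul !mulmxA.
apply: pd; apply/negP => /eqP h; move/negP: v0; apply; apply/eqP/matrixP => r o.
by rewrite (ord1 o) -selmx_mv h !mxE.
Qed.

Lemma sym_sub (Sigma : 'M[R]_n) (S : {set 'I_n}) : Sigma^T = Sigma ->
  ((selmx R S)^T *m Sigma *m selmx R S)^T = (selmx R S)^T *m Sigma *m selmx R S.
Proof. by move=> sS; rewrite !trmx_mul trmxK sS mulmxA. Qed.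

Lemma Ahat_agree (Sigma : 'M[R]_n) (S : {set 'I_n}) (u : 'cV[R]_n) k :
  Sigma^T = Sigma -> PDm Sigma -> k \in S -> (Ahat Sigma S *m u) k 0 = u k 0.
Proof.
move=> sS pd kS.
have uW := unit_pd (@sym_sub Sigma S sS) (@pd_sub Sigma S pd).
have e : (selmx R S)^T *m Ahat Sigma S = (selmx R S)^T.
  by rewrite /Ahat !mulmxA mulmxV // mul1mx.
rewrite -(enum_rankK_in kS kS) -!selmxT_mv mulmxA e //.
Qed.

Lemma Ahat_zero (Sigma : 'M[R]_n) (S : {set 'I_n}) (u : 'cV[R]_n) k :
  Sigma^T = Sigma -> PDm Sigma -> k \notin S -> (invmx Sigma *m (Ahat Sigma S *m u)) k 0 = 0.
Proof.
move=> sS pd kS; have uS := unit_pd sS pd.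
rewrite /Ahat !mulmxA mulVmx // mul1mx -!mulmxA; exact: selmx_out.
Qed.

End F.


Section G.
Context {R : realType} {n : nat}.
Implicit Types (u v w b x : 'cV[R]_n).

Lemma dotvD b u v : dotv b (u + v) = dotv b u + dotv b v.
Proof. by rewrite /dotv -big_split; apply: eq_bigr => k _; rewrite mxE mulrDr. Qed.
Lemma dotvB b u v : dotv b (u - v) = dotv b u - dotv b v.
Proof. by rewrite /dotv -sumrB; apply: eq_bigr => k _; rewrite !mxE mulrBr. Qed.
Lemma dotvZ (c : R) b u : dotv (c *: b) u = c * dotv b u.
Proof. by rewrite /dotv mulr_sumr; apply: eq_bigr => k _; rewrite mxE mulrA. Qed.
Lemma dotv0 u : dotv 0 u = 0.
Proof. by rewrite /dotv big1 // => k _; rewrite mxE mul0r. Qed.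

Lemma condexp_lin m (B0 : 'cV[R]_m) (B : 'M[R]_(n, m)) (mu : 'cV[R]_n) (Sigma : 'M[R]_n)
  (S : {set 'I_n}) x kk :
  Sigma^T = Sigma -> PDm Sigma ->
  gauss_condexp mu Sigma S (fun y => (B0 + B^T *m y) kk 0) x
  = (B0 + B^T *m (mu + Ahat Sigma S *m (x - mu))) kk 0.
Proof.
move=> sS pd.
have uS := unit_pd sS pd.
set Q := invmx Sigma.
have sQ : Q^T = Q by rewrite /Q trmx_inv sS.
have pdQ : forall l, pdon l Q.
  move=> l v v0 _; rewrite qf_dot.
  set w := Q *m v.
  have vE : v = Sigma *m w by rewrite /w /Q mulKVmx.
  have w0 : w != 0 by apply: contraNneq v0 => e; rewrite vE e mulmx0.
  have := pd w w0.
  have -> : (w^T *m Sigma *m w) 0 0 = \sum_k v k 0 * (Q *m v) k 0.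
    rewrite -mulmxA -vE mxE; apply: eq_bigr => k _.
    by rewrite mxE mulrC.
  by [].
set C0 := (Num.sqrt ((2 * pi) ^+ n * \det Sigma))^-1.
have C0p : 0 < C0.
  rewrite /C0 invr_gt0 sqrtr_gt0; apply: mulr_gt0; last exact: detpos.
  by apply: exprn_gt0; apply: mulr_gt0 => //; exact: pi_gt0.
have pdfE : gauss_pdf mu Sigma = fun y => C0 * Gf Q mu y.
  by apply/funext => y; rewrite /gauss_pdf /Gf /qf mulrC.
set bk : 'cV[R]_n := \col_i B i kk.
have fE : forall y, (B0 + B^T *m y) kk 0 = B0 kk 0 + dotv bk y.
  move=> y; rewrite !mxE; congr (_ + _); apply: eq_bigr => i _; by rewrite !mxE.
set a1 := C0 * (B0 kk 0 + dotv bk mu).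
have numE : (fun y => (B0 + B^T *m y) kk 0 * gauss_pdf mu Sigma y)
   = (fun y => (a1 + dotv (C0 *: bk) (y - mu)) * Gf Q mu y).
  apply/funext => y; rewrite pdfE fE dotvZ dotvB /a1; ring.
have denE : gauss_pdf mu Sigma = (fun y => (C0 + dotv 0 (y - mu)) * Gf Q mu y).
  by rewrite pdfE; apply/funext => y; rewrite dotv0 addr0.
have [K [Q' [K0 _ _ _ lin]]] := key mu (enum_uniq (pred_of_set (~: S))) sQ (pdQ _).
have [b1 [cb1 f1]] := lin a1 (C0 *: bk).
have [b2 [cb2 f2]] := lin C0 0.
set u := x - mu; set v := Ahat Sigma S *m u.
have ag : agree (enum (~: S)) u v.
  move=> k; rewrite mem_enum !inE negbK => kS; exact: Ahat_agree.
have zr : zeroon (enum (~: S)) Q v.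
  move=> k; rewrite mem_enum !inE => kS; exact: Ahat_zero.
rewrite /gauss_condexp numE f1 denE f2 (cb1 _ _ ag zr) (cb2 _ _ ag zr) dotv0 addr0 dotvZ.
rewrite fE dotvD.
have Gp : 0 < Gf Q' mu x by exact: expR_gt0.
rewrite /a1; field.
by rewrite !gt_eqF.
Qed.


End G.

Lemma subsub_cancel (V : zmodType) (a b z : V) : (a - z) - (b - z) = a - b.
Proof. by rewrite opprB addrA subrK. Qed.

Unset Implicit Arguments.
Local Close Scope classical_set_scope.

Theorem mainTheorem10 (R : realType) (n m : nat)
    (B0 : 'cV[R]_m) (B : 'M[R]_(n, m)) (mu : 'cV[R]_n) (Sigma : 'M[R]_n) :
  spd Sigma ->
  forall (x : 'cV[R]_n) (i : 'I_n),
    shap mu Sigma (fun y : 'cV[R]_n => B0 + B^T *m y) x i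
    = B^T *m Mi Sigma i *m (x - mu).
Proof.
move=> [sS pd] x i.
have vfE : forall S, vf mu Sigma (fun y : 'cV[R]_n => B0 + B^T *m y) x S
    = B^T *m (Ahat Sigma S *m (x - mu)) - B^T *m (Ahat Sigma finset.set0 *m (x - mu)).
  move=> S; apply/matrixP => kk o; rewrite (ord1 o) mxE.
  rewrite !condexp_lin // !mulmxDr.
  have e : forall (c d X Y : 'cV[R]_m), (c + (d + X)) kk 0 - (c + (d + Y)) kk 0 = (X - Y) kk 0.
    by move=> c d X Y; rewrite !mxE; ring.
  by rewrite e.
rewrite /shap /Mi mulmx_sumr mulmx_suml; apply: eq_bigr => S _.
rewrite !vfE subsub_cancel -scalemxAr -scalemxAl; congr (_ *: _).
by rewrite -mulmxBr -mulmxBl mulmxA.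
Qed.
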